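(* Let $k$ be an infinite field of characteristic $0$. If $X_1,X_2,Y_1,Y_2$ are finite sets and the free representations $W(X_1,Y_1)$ and $W(X_2,Y_2)$ are isomorphic, then $|X_1|=|X_2|$ and $|Y_1|=|Y_2|$.
   Context: A representation $(L,V)$ is a Lie algebra $L$ over $k$ with an $L$-module $V$; an isomorphism is a pair $(\varphi,\psi)$ of a Lie algebra isomorphism $\varphi$ and a linear bijection $\psi$ with $\varphi(l)\circ\psi(v)=\psi(l\circ v)$. $W(X,Y)=(L(X),A(X)Y)$, where $L(X)$ is the free Lie algebra on $X$, $A(X)$ the free associative algebra with unit on $X$, and $A(X)Y=\bigoplus_{y\in Y}A(X)y$ the free $A(X)$-module with basis $Y$. *)

(* Defs.v *)
From HB Require Import structures.
From mathcomp Require Import all_boot all_order all_algebra.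
From mathcomp Require Import monalg.
Set Implicit Arguments. Unset Strict Implicit. Unset Printing Implicit Defensive.
Import GRing.Theory.
Local Open Scope ring_scope.

(* A(X): the free associative unital k-algebra on X, realized as the monoid
   algebra of the free monoid {fmonom X} (noncommutative polynomials). *)
Definition FreeAlg (k : fieldType) (X : finType) := {malg k[{fmonom X}]}.

Definition gen (k : fieldType) (X : finType) (x : X) : FreeAlg k X :=
  << fmu x >>.

Definition lie (k : fieldType) (X : finType) (a b : FreeAlg k X) : FreeAlg k X :=
  a * b - b * a.

(* L(X): the Lie subalgebra of A(X) generated by X (the free Lie algebra). *)
Inductive inLie (k : fieldType) (X : finType) : FreeAlg k X -> Prop :=
  | inLie_gen (x : X) : inLie (gen k x)
  | inLie_0 : inLie 0
  | inLie_lin (c : k) (a b : FreeAlg k X) :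
      inLie a -> inLie b -> inLie (c *: a + b)
  | inLie_br (a b : FreeAlg k X) : inLie a -> inLie b -> inLie (lie a b).

(* A(X)Y: the free left A(X)-module with basis Y (coordinates indexed by Y) *)
Definition FreeMod (k : fieldType) (X Y : finType) := {ffun Y -> FreeAlg k X}.

(* the A(X)-action (left multiplication), restricted to L(X) in W(X,Y) *)
Definition act (k : fieldType) (X Y : finType) (a : FreeAlg k X)
  (v : FreeMod k X Y) : FreeMod k X Y := [ffun y => a * v y].

(* (phi, psi) is an isomorphism of representations
   W(X1,Y1) = (L(X1), A(X1)Y1) --> W(X2,Y2) = (L(X2), A(X2)Y2):
   phi restricted to L(X1) is a Lie algebra isomorphism onto L(X2),
   psi is a k-linear bijection, and phi(l) . psi(v) = psi(l . v). *)
Definition rep_iso (k : fieldType) (X1 Y1 X2 Y2 : finType)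
  (phi : FreeAlg k X1 -> FreeAlg k X2)
  (psi : FreeMod k X1 Y1 -> FreeMod k X2 Y2) : Prop :=
  (forall l, inLie l -> inLie (phi l)) /\
  (forall l2, inLie l2 -> exists l, inLie l /\ phi l = l2) /\
  (forall l l', inLie l -> inLie l' -> phi l = phi l' -> l = l') /\
  (forall (c : k) l l', inLie l -> inLie l' ->
      phi (c *: l + l') = c *: phi l + phi l') /\
  (forall l l', inLie l -> inLie l' -> phi (lie l l') = lie (phi l) (phi l')) /\
  (forall (c : k) u v, psi (c *: u + v) = c *: psi u + psi v) /\
  bijective psi /\
  (forall l v, inLie l -> psi (act l v) = act (phi l) (psi v)).

(* Main.v *)
Require Import Defs.
From HB Require Import structures.
From mathcomp Require Import all_boot all_order all_algebra.
From mathcomp Require Import finmap monalg.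
Set Implicit Arguments. Unset Strict Implicit. Unset Printing Implicit Defensive.
Import GRing.Theory.
Local Open Scope ring_scope.

Section Alg.
Variables (k : fieldType) (X : finType).
Implicit Types (a b r l : FreeAlg k X).
Local Notation e1 := (@mone {fmonom X}).

Lemma fmeqE (m1 m2 : {fmonom X}) : (m1 == m2) = (val m1 == val m2).
Proof. by rewrite fmP. Qed.

Lemma genM_coef x r (m : {fmonom X}) :
  (gen k x * r)@_m = if val m is y :: s then (x == y)%:R * r@_(FMonom s) else 0.
Proof.
rewrite /gen mcoeffMl msuppU1 big_seq_fset1 mcoeffUU.
case: m => [[|y s]] /=.
  rewrite big1 // => k2 _; rewrite fmeqE /= fmM fmU /=.
  by rewrite mulr0n.
rewrite [in RHS](monalgE r) raddf_sum mulr_sumr; apply: eq_bigr => k2 _.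
rewrite /= mcoeffU mul1r fmeqE /= fmM fmU /= eqseq_cons fmeqE /=.
by case: (x == y); case: (val k2 == s); rewrite ?mul1r ?mul0r ?mulr0n ?mulr1n.
Qed.

Lemma coef1M a b : (a * b)@_e1 = a@_e1 * b@_e1.
Proof. exact: ((@mcoeff1g_is_multiplicative _ k).1 a b). Qed.

Lemma fm1E : e1 = FMonom [::].
Proof. by apply/eqP; rewrite fmeqE -fm1. Qed.

Lemma gen_coef y (m : {fmonom X}) : (gen k y)@_m = (fmu y == m)%:R.
Proof. by rewrite /gen mcoeffU. Qed.

Lemma gen_coef1 y : (gen k y)@_e1 = 0.
Proof. by rewrite gen_coef fmeqE /= fm1 fmU. Qed.

Lemma genU x c (m : {fmonom X}) :
  gen k x * << c *g m >> = << c *g FMonom (x :: val m) >>.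
Proof.
apply/malgP=> m'; rewrite genM_coef mcoeffU.
case: m' => [[|z t]] /=.
  by rewrite mulr0n.
rewrite mcoeffU !fmeqE /= eqseq_cons.
by case: (x == z); case: (val m == t); rewrite ?mul1r ?mul0r ?mulr0n ?mulr1n.
Qed.

Lemma decomp a : exists q : {ffun X -> FreeAlg k X},
  a = (a@_e1)%:MP + \sum_x gen k x * q x.
Proof.
pose P (b : FreeAlg k X) := exists q : {ffun X -> FreeAlg k X},
  b = (b@_e1)%:MP + \sum_x gen k x * q x.
suff : P (\sum_(m <- msupp a) << a@_m *g m >>) by rewrite -monalgE.
apply: big_ind.
- exists [ffun=> 0]; rewrite mcoeff0 malgC0E add0r big1 // => x _.
  by rewrite ffunE mulr0.
- move=> b1 b2 [q1 E1] [q2 E2]; exists [ffun x => q1 x + q2 x].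
  rewrite {1}E1 {1}E2 mcoeffD rmorphD.
  under [in RHS]eq_bigr do rewrite ffunE mulrDr.
  by rewrite big_split /= addrACA.
- move=> m _; move: (a@_m) => c; case: m => [[|y s]].
    exists [ffun=> 0]; rewrite big1 ?addr0; last by move=> x _; rewrite ffunE mulr0.
    by rewrite -fm1E mcoeffUU.
  exists [ffun x => if x == y then << c *g FMonom s >> else 0].
  rewrite mcoeffU fmeqE /= fm1 /= mulr0n malgC0E add0r.
  rewrite (bigD1 y) //= big1 ?addr0.
    by rewrite ffunE eqxx genU.
  by move=> x /negbTE nxy; rewrite ffunE nxy mulr0.
Qed.

Lemma coef_fmu_M a b y : a@_e1 = 0 -> b@_e1 = 0 -> (a * b)@_(fmu y) = 0.
Proof.
move=> a0 b0; have [q Ea] := decomp a.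
rewrite Ea a0 malgC0E add0r mulr_suml raddf_sum /= big1 // => x _.
rewrite -mulrA genM_coef fmuE /= -fm1E coef1M b0 !mulr0 //.
Qed.

Lemma lie_coef1 l : inLie l -> l@_e1 = 0.
Proof.
elim=> [x||c a b _ Ha _ Hb|a b _ Ha _ Hb].
- exact: gen_coef1.
- exact: mcoeff0.
- by rewrite mcoeffD mcoeffZ Ha Hb mulr0 addr0.
- by rewrite /lie mcoeffB !coef1M Ha Hb mulr0 subrr.
Qed.

Definition Dm (a : FreeAlg k X) : 'rV[k]_#|X| := \row_i a@_(fmu (enum_val i)).
Definition Gm (c : 'rV[k]_#|X|) : FreeAlg k X := \sum_i c 0 i *: gen k (enum_val i).

Lemma Dm_lin c a b : Dm (c *: a + b) = c *: Dm a + Dm b.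
Proof. by apply/matrixP=> i j; rewrite !mxE mcoeffD mcoeffZ. Qed.

Lemma Gm_lin c u v : Gm (c *: u + v) = c *: Gm u + Gm v.
Proof.
rewrite /Gm scaler_sumr -big_split /=; apply: eq_bigr => i _.
by rewrite !mxE scalerDl scalerA.
Qed.

Lemma Dm0 : Dm 0 = 0.
Proof. by apply/matrixP=> i j; rewrite !mxE mcoeff0. Qed.

Lemma Gm0 : Gm 0 = 0.
Proof. by rewrite /Gm big1 // => i _; rewrite mxE scale0r. Qed.

Lemma fmu_eq x y : (fmu x == fmu y :> {fmonom X}) = (x == y).
Proof. by rewrite fmeqE /= !fmU eqseq_cons andbT. Qed.

Lemma DmG c : Dm (Gm c) = c.
Proof.
apply/matrixP=> i j; rewrite !mxE /Gm raddf_sum /= (bigD1 j) //= big1.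
  by rewrite mcoeffZ gen_coef eqxx mulr1 addr0 (ord1 i).
move=> j' nj; rewrite mcoeffZ gen_coef fmu_eq.
by rewrite (inj_eq enum_val_inj) (negbTE nj) mulr0.
Qed.

Lemma GmD x : Gm (Dm (gen k x)) = gen k x.
Proof.
rewrite /Gm (bigD1 (enum_rank x)) //= big1.
  by rewrite mxE gen_coef enum_rankK eqxx scale1r addr0.
move=> j nj; rewrite mxE gen_coef fmu_eq.
case: eqP => [ex|]; last by rewrite scale0r.
by move: nj; rewrite ex enum_valK eqxx.
Qed.

Lemma Dm_lie a b : inLie a -> inLie b -> Dm (lie a b) = 0.
Proof.
move=> La Lb; apply/matrixP=> i j; rewrite !mxE /lie mcoeffB.
by rewrite !coef_fmu_M ?lie_coef1 // subrr.
Qed.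

Lemma inLie_G c : inLie (Gm c).
Proof.
rewrite /Gm; elim/big_ind: _ => //.
- exact: (@inLie_0 k X).
- by move=> a b La Lb; rewrite -[a]scale1r; apply: inLie_lin.
- by move=> i _; rewrite -[_ *: _]addr0; apply: inLie_lin; [apply: inLie_gen|apply: (@inLie_0 k X)].
Qed.

Definition brsum (s : seq (FreeAlg k X * FreeAlg k X * k)) :=
  \sum_(p <- s) p.2 *: lie p.1.1 p.1.2.

Lemma lie_decomp l : inLie l -> exists s,
  (forall p, p \in s -> inLie p.1.1 /\ inLie p.1.2) /\ l = Gm (Dm l) + brsum s.
Proof.
elim=> [x||c a b La [sa [Ha Ea]] Lb [sb [Hb Eb]]|a b La _ Lb _].
- by exists [::]; split=> //; rewrite GmD /brsum big_nil addr0.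
- by exists [::]; split=> //; rewrite Dm0 Gm0 /brsum big_nil addr0.
- exists ([seq (p.1, c * p.2) | p <- sa] ++ sb); split.
    move=> p; rewrite mem_cat => /orP[/mapP[q qs ->]|]; last exact: Hb.
    exact: (Ha q qs).
  rewrite Dm_lin Gm_lin /brsum big_cat big_map /=.
  rewrite {1}Ea {1}Eb /brsum scalerDr scaler_sumr.
  under [X in _ = _ + (X + _)]eq_bigr do rewrite -scalerA.
  by rewrite addrACA addrA.
- exists [:: (a, b, 1)]; split.
    by move=> p; rewrite inE => /eqP ->.
  by rewrite Dm_lie // Gm0 add0r /brsum big_cons big_nil addr0 scale1r.
Qed.

Lemma inLie_brsum s : (forall p, p \in s -> inLie p.1.1 /\ inLie p.1.2) ->
  inLie (brsum s).
Proof.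
rewrite /brsum; elim: s => [|p s IH] H; first by rewrite big_nil; exact: (@inLie_0 k X).
rewrite big_cons; have [L1 L2] := H p (mem_head _ _).
apply: inLie_lin; first exact: inLie_br.
by apply: IH => q qs; apply: H; rewrite inE qs orbT.
Qed.

Lemma Dm_brsum s : (forall p, p \in s -> inLie p.1.1 /\ inLie p.1.2) ->
  Dm (brsum s) = 0.
Proof.
rewrite /brsum; elim: s => [|p s IH] H; first by rewrite big_nil Dm0.
rewrite big_cons Dm_lin; have [L1 L2] := H p (mem_head _ _).
rewrite Dm_lie // scaler0 add0r; apply: IH => q qs; apply: H.
by rewrite inE qs orbT.
Qed.
End Alg.

Section Mod.
Variables (k : fieldType) (X Y : finType).
Local Notation e1 := (@mone {fmonom X}).

Definition Em (c : 'rV[k]_#|Y|) : FreeMod k X Y := [ffun y => (c 0 (enum_rank y))%:MP].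
Definition Pm (v : FreeMod k X Y) : 'rV[k]_#|Y| := \row_i (v (enum_val i))@_e1.

Lemma Pm_lin c u v : Pm (c *: u + v) = c *: Pm u + Pm v.
Proof. by apply/matrixP=> i j; rewrite !mxE !ffunE mcoeffD mcoeffZ. Qed.

Lemma Pm0 : Pm 0 = 0.
Proof. by apply/matrixP=> i j; rewrite !mxE ffunE mcoeff0. Qed.

Lemma Em_lin c u v : Em (c *: u + v) = c *: Em u + Em v.
Proof.
apply/ffunP=> y; rewrite !ffunE !mxE rmorphD /= -mul_malgC.
by rewrite (rmorphM (@malgC _ k)).
Qed.

Lemma PmE c : Pm (Em c) = c.
Proof. by apply/matrixP=> i j; rewrite !mxE ffunE malgCK enum_valK (ord1 i). Qed.

Lemma Pm_act l v : l@_e1 = 0 -> Pm (act l v) = 0.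
Proof. by move=> l0; apply/matrixP=> i j; rewrite !mxE ffunE coef1M l0 mul0r. Qed.

Lemma decompM v : exists U : {ffun X -> FreeMod k X Y},
  v = Em (Pm v) + \sum_x act (gen k x) (U x).
Proof.
have db (a : FreeAlg k X) : exists q : {ffun X -> FreeAlg k X},
    a == (a@_e1)%:MP + \sum_x gen k x * q x.
  by have [q Eq] := decomp a; exists q; apply/eqP.
exists [ffun x => [ffun y => xchoose (db (v y)) x]].
apply/ffunP=> y; rewrite ffunE sum_ffunE !ffunE !mxE enum_rankK.
rewrite {1}(eqP (xchooseP (db (v y)))); congr (_ + _).
by apply: eq_bigr => x _; rewrite !ffunE.
Qed.
Lemma Em0 : Em 0 = 0.
Proof. by apply/ffunP=> y; rewrite !ffunE mxE malgC0E. Qed.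
End Mod.
Lemma dim_eq (k : fieldType) m n (f : 'rV[k]_m -> 'rV[k]_n) :
  (forall c u v, f (c *: u + v) = c *: f u + f v) ->
  (forall u, f u = 0 -> u = 0) ->
  (forall t, exists u, f u = t) -> m = n.
Proof.
move=> flin finj fsurj.
have f0 : f 0 = 0.
  have H := flin 1 0 0; rewrite !scale1r addr0 in H.
  by apply: (@addrI _ (f 0)); rewrite addr0 -H.
pose A := \matrix_(i, j) f (delta_mx 0 i) 0 j.
have fA u : f u = u *m A.
  rewrite {1}[u]row_sum_delta.
  have -> : f (\sum_j u 0 j *: delta_mx 0 j) = \sum_j u 0 j *: f (delta_mx 0 j).
    apply: (big_rec2 (fun a b => f b = a)) => // i y1 y2 _ <-.
    by rewrite flin.
  apply/rowP=> j; rewrite !mxE summxE; apply: eq_bigr => i _.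
  by rewrite !mxE.
have rf : row_free A.
  rewrite -kermx_eq0; apply/eqP/row_matrixP=> i; rewrite row0; apply: finj.
  by rewrite fA; apply/sub_kermxP; exact: row_sub.
have rF : row_full A.
  have fsb t : exists u, f u == t by have [u <-] := fsurj t; exists u.
  apply/row_fullP; exists (\matrix_(i < n) xchoose (fsb (delta_mx 0 i))).
  apply/row_matrixP=> i; rewrite row_mul rowK row1 -fA.
  exact/eqP/(xchooseP (fsb (delta_mx 0 i))).
have h1 := rank_leq_col A; have h2 := rank_leq_row A.
move: rf rF; rewrite /row_free /row_full => /eqP e1 /eqP e2.
by apply/eqP; rewrite eqn_leq; apply/andP; split; [rewrite -e1 | rewrite -e2].
Qed.

Theorem theorem4 (k : fieldType)
  (hchar : [pchar k] =i pred0)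
  (hinf : ~ exists s : seq k, forall x : k, x \in s)
  (X1 Y1 X2 Y2 : finType) :
  (exists (phi : FreeAlg k X1 -> FreeAlg k X2)
          (psi : FreeMod k X1 Y1 -> FreeMod k X2 Y2), rep_iso phi psi) ->
  #|X1| = #|X2| /\ #|Y1| = #|Y2|.
Proof.
move=> [phi [psi [phiL [phiS [phiI [phiLin [phiBr [psiLin [psiB actH]]]]]]]]].
have phi0 : phi 0 = 0.
  have H := phiLin 1 0 0 (@inLie_0 k X1) (@inLie_0 k X1).
  rewrite !scale1r addr0 in H.
  by apply: (@addrI _ (phi 0)); rewrite addr0 -H.
have phiD a b : inLie a -> inLie b -> phi (a + b) = phi a + phi b.
  by move=> La Lb; have := phiLin 1 a b La Lb; rewrite !scale1r.
have psi0 : psi 0 = 0.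
  have H := psiLin 1 0 0; rewrite !scale1r addr0 in H.
  by apply: (@addrI _ (psi 0)); rewrite addr0 -H.
have psiD u v : psi (u + v) = psi u + psi v.
  by have := psiLin 1 u v; rewrite !scale1r.
have [psiinv psiK psiK'] := psiB.
split.
- apply: (@dim_eq k _ _ (fun c => Dm (phi (Gm c)))).
  + move=> c u v /=; rewrite Gm_lin phiLin; [exact: Dm_lin|exact: inLie_G|exact: inLie_G].
  + move=> c /= H.
    have [s [Hs Es]] := lie_decomp (phiL _ (inLie_G c)).
    rewrite H Gm0 add0r in Es.
    have : exists l', inLie l' /\ phi l' = brsum s /\ Dm l' = 0.
      elim: s Hs {Es} => [|p s IH] Hs.
        by exists 0; split; [exact: (@inLie_0 k X1)|rewrite phi0 /brsum big_nil Dm0].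
      have [Hp1 Hp2] := Hs p (mem_head _ _).
      have [l1 [L1 [P1 D1]]] := IH (fun q qs => Hs q (@mem_behead _ (p :: s) q qs)).
      have [a [La Ea]] := phiS _ Hp1; have [b [Lb Eb]] := phiS _ Hp2.
      exists (p.2 *: lie a b + l1); split; first by apply: inLie_lin => //; apply: inLie_br.
      rewrite phiLin //; last exact: inLie_br.
      rewrite phiBr // Ea Eb P1 Dm_lin Dm_lie // D1 scaler0 addr0; split=> //.
      by rewrite /brsum big_cons.
    move=> [l' [L' [P' D']]].
    have := phiI _ _ (inLie_G c) L'; rewrite P' -Es => /(_ erefl) E.
    by rewrite -(DmG c) E.
  + move=> t; have [l [Ll El]] := phiS _ (inLie_G t).
    exists (Dm l) => /=.
    have [s [Hs Es]] := lie_decomp Ll.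
    have Ls : inLie (brsum s) by apply: inLie_brsum.
    have phis : forall s', (forall p, p \in s' -> inLie p.1.1 /\ inLie p.1.2) ->
        phi (brsum s') = brsum [seq (phi p.1.1, phi p.1.2, p.2) | p <- s'].
      elim=> [|p s' IH] H; first by rewrite /brsum !big_nil phi0.
      have [Hp1 Hp2] := H p (mem_head _ _).
      have H' : forall q, q \in s' -> inLie q.1.1 /\ inLie q.1.2.
        by move=> q qs; apply: H; rewrite inE qs orbT.
      rewrite /brsum big_cons /= big_cons /=.
      rewrite phiLin //; [|exact: inLie_br|exact: inLie_brsum].
      by rewrite phiBr // -/(brsum s') IH.
    have DmD a b : Dm (a + b) = Dm a + Dm b.
      by have := Dm_lin 1 a b; rewrite !scale1r.
    have Hm : forall p, p \in [seq (phi p.1.1, phi p.1.2, p.2) | p <- s] ->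
        inLie p.1.1 /\ inLie p.1.2.
      move=> p /mapP[q qs ->] /=; have [h1 h2] := Hs q qs; split; exact: phiL.
    have E1 : Dm (phi l) = t by rewrite El DmG.
    have E2 : phi l = phi (Gm (Dm l)) + phi (brsum s).
      by rewrite {1}Es; apply: phiD; [exact: inLie_G|exact: Ls].
    rewrite E2 DmD (phis s Hs) (Dm_brsum Hm) addr0 in E1.
    exact: E1.
- apply: (@dim_eq k _ _ (fun c => Pm (psi (@Em k X1 Y1 c)))).
  + by move=> c u v /=; rewrite Em_lin psiLin; exact: Pm_lin.
  + have PmD (X Y : finType) (u v : FreeMod k X Y) : Pm (u + v) = Pm u + Pm v.
      by have := Pm_lin 1 u v; rewrite !scale1r.
    move=> c /= H.
    have [U EU] := decompM (psi (Em X1 c)).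
    have : exists v, psi v = \sum_x act (gen k x) (U x) /\ Pm v = 0.
      apply: (big_ind (fun w => exists v, psi v = w /\ Pm v = 0)).
      * by exists 0; split; [exact: psi0|exact: Pm0].
      * move=> w1 w2 [v1 [P1 Q1]] [v2 [P2 Q2]]; exists (v1 + v2).
        by rewrite psiD P1 P2 PmD Q1 Q2 addr0.
      * move=> x _; have [l [Ll El]] := phiS _ (inLie_gen k x).
        exists (act l (psiinv (U x))); split.
          by rewrite actH // psiK' El.
        exact: (Pm_act _ (lie_coef1 Ll)).
    move=> [v [Pv Qv]].
    have : psi v = psi (Em X1 c) by rewrite Pv [in RHS]EU H Em0 add0r.
    move/(can_inj psiK) => Ev.
    by rewrite -(PmE X1 c) -Ev.
  + have PmD (X Y : finType) (u v : FreeMod k X Y) : Pm (u + v) = Pm u + Pm v.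
      by have := Pm_lin 1 u v; rewrite !scale1r.
    move=> t; pose v := psiinv (Em X2 t); have [U EU] := decompM v.
    exists (Pm v) => /=.
    have R : Pm (psi (\sum_x act (gen k x) (U x))) = 0.
      apply: (big_ind (fun w => Pm (psi w) = 0)).
      * by rewrite psi0 Pm0.
      * by move=> w1 w2 P1 P2; rewrite psiD PmD P1 P2 addr0.
      * move=> x _; rewrite actH; last exact: inLie_gen.
        exact: (Pm_act _ (lie_coef1 (phiL _ (inLie_gen k x)))).
    have : Pm (psi v) = t by rewrite psiK' (PmE X2 t).
    by rewrite {1}EU psiD PmD R addr0.
Qed.
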